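(* For every positive integer $n$, $$S_n=2\sum_{k=1}^n\binom{n-1}{k-1}\binom{2k}{k}\binom{2n-2k}{n-k}.$$
   Context: $(S_n)_{n\ge0}$ is the integer sequence defined by $S_0=1$, $S_1=4$ and $(n+1)^2S_{n+1}=4(3n^2+3n+1)S_n-32n^2S_{n-1}$ for $n\ge1$; it is known that $S_n=\sum_{k=0}^n\binom nk\binom{2k}k\binom{2n-2k}{n-k}$ for all $n\ge0$. *)

(* Defs.v *)
From mathcomp Require Import all_boot all_order all_algebra.
Set Implicit Arguments.
Unset Strict Implicit.
Unset Printing Implicit Defensive.
Import GRing.Theory Num.Theory.
Local Open Scope ring_scope.

Definition S_rec (S : nat -> int) : Prop :=
  [/\ S 0%N = 1, S 1%N = 4 &
      forall n : nat, (1 <= n)%N ->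
        (n.+1%:Z) ^+ 2 * S n.+1 =
        4 * (3 * n%:Z ^+ 2 + 3 * n%:Z + 1) * S n - 32 * n%:Z ^+ 2 * S n.-1].

(* Main.v *)
Require Import Defs.
From mathcomp Require Import all_boot all_order all_algebra.
From mathcomp Require Import ring zify.
Import GRing.Theory Num.Theory.
Local Open Scope ring_scope.

Definition H (k m : nat) : rat :=
  ((k+m)`! * (2 * k)`! * (2 * m)`!)%N%:R / ((k`! ^ 3 * m`! ^ 3)%N%:R).
Definition FF (N k : nat) : rat := ('C(N,k) * 'C(2 * k,k) * 'C(2 * N-2 * k, N-k))%N%:R.

Lemma fact_neq0 (n : nat) : (n`!%:R : rat) != 0.
Proof. by rewrite pnatr_eq0 -lt0n fact_gt0. Qed.

Lemma FH k m : FF (k+m)%N k = H k m.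
Proof.
rewrite /FF /H.
have d0 : ((k`! ^ 3 * m`! ^ 3)%N%:R : rat) != 0.
  by rewrite natrM !natrX mulf_neq0 // expf_neq0 // fact_neq0.
apply: (mulIf d0); rewrite divfK // -!natrM; congr (_%:R).
rewrite mulnDr !addKn.
have e1 := bin_fact (leq_addr m k). rewrite addKn in e1.
have e2 := bin_fact (leq_addr k k). rewrite addnK addnn -mul2n in e2.
have e3 := bin_fact (leq_addr m m). rewrite addnK addnn -mul2n in e3.
rewrite -e1 -e2 -e3. ring.
Qed.

Lemma Hm k m : H k m.+1 * (m.+1%:R)^+2 =
  H k m * (2 * ((k + m).+1)%N%:R * ((2 * m).+1)%N%:R).
Proof.
rewrite /H addnS.
have -> : (2 * m.+1 = (2 * m).+2)%N by lia.
rewrite !factS.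
have f1 := fact_neq0 k. have f2 := fact_neq0 m.
have f3 := fact_neq0 (k+m). have f4 := fact_neq0 (2 * m).
have f5 := fact_neq0 (2 * k).
have g : (m.+1%:R : rat) != 0 by rewrite pnatr_eq0.
rewrite !natrM.
field; by rewrite ?nat1r ?pnatr_eq0 -?lt0n ?fact_gt0.
Qed.

Lemma Hk k m : H k.+1 m * (k.+1%:R)^+2 =
  H k m * (2 * ((k + m).+1)%N%:R * ((2 * k).+1)%N%:R).
Proof.
rewrite /H addSn.
have -> : (2 * k.+1 = (2 * k).+2)%N by lia.
rewrite !factS.
have f1 := fact_neq0 k. have f2 := fact_neq0 m.
have f3 := fact_neq0 (k+m). have f4 := fact_neq0 (2 * m).
have f5 := fact_neq0 (2 * k).
have g : (k.+1%:R : rat) != 0 by rewrite pnatr_eq0.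
rewrite !natrM.
field; by rewrite ?nat1r ?pnatr_eq0 -?lt0n ?fact_gt0.
Qed.

Lemma FF0 N k : (N < k)%N -> FF N k = 0.
Proof. by move=> h; rewrite /FF bin_small. Qed.

Lemma FFdown N k : (0 < N)%N ->
  FF N.-1 k * (2 * N%:R * (2 * N%:R - 2 * k%:R - 1)) = FF N k * (N%:R - k%:R)^+2.
Proof.
move=> hN; case: (ltnP k N) => hk.
  have [m ->] : exists m, N = (k + m.+1)%N by exists (N - k).-1; lia.
  rewrite FH addnS /= FH.
  have e : (((k + m).+1)%N%:R - k%:R = m.+1%:R :> rat) by rewrite -addnS natrD addrAC subrr add0r.
  rewrite e Hm -[((k+m).+1)%N]addn1 -[((2 * m).+1)%N]addn1 !natrD ?natrM.
  ring.
rewrite FF0; last by lia.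
case: (ltnP N k) => h2; first by rewrite (@FF0 N k h2) !mul0r.
have -> : k = N by lia.
by rewrite mul0r [N%:R - N%:R]subrr expr2 !mul0r mulr0.
Qed.

Lemma FFright N k :
  FF N k.+1 * ((k.+1%:R)^+2 * (2 * N%:R - 2 * k%:R - 1)) =
  FF N k * (N%:R - k%:R)^+2 * (2 * k%:R + 1).
Proof.
case: (ltnP k N) => hk.
  have [m ->] : exists m, N = (k + m.+1)%N by exists (N - k).-1; lia.
  have e : ((k + m.+1)%N%:R - k%:R = m.+1%:R :> rat) by rewrite natrD addrAC subrr add0r.
  rewrite e FH addnS -addSn FH.
  transitivity (H k.+1 m * (k.+1%:R)^+2 * (2 * (k + m.+1)%N%:R - 2 * k%:R - 1)); first ring.
  rewrite Hk.
  transitivity (H k m.+1 * m.+1%:R ^+ 2 * (2 * k%:R + 1)); last ring.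
  rewrite Hm -[((k+m).+1)%N]addn1 -[((2 * m).+1)%N]addn1 -[((2 * k).+1)%N]addn1 !natrD ?natrM.
  ring.
rewrite FF0; last by lia.
case: (ltnP N k) => h2; first by rewrite (@FF0 N k h2) !mul0r.
have -> : k = N by lia.
by rewrite mul0r [N%:R - N%:R]subrr expr2 mul0r mulr0 mul0r.
Qed.

Lemma odd_neq0 (a b : nat) : (2 * a%:R - 2 * b%:R - 1 : rat) != 0.
Proof.
apply/eqP => h.
have h' : (2 * a%:R = 2 * b%:R + 1 :> rat).
  by apply/eqP; rewrite -subr_eq0 opprD addrA h.
have : (2 * a = 2 * b + 1)%N.
  by apply/eqP; rewrite -(eqr_nat rat) natrD !natrM h'.
lia.
Qed.

Definition T (n : nat) : rat := \sum_(k < n.+1) FF n k.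

Lemma Text n d : \sum_(0 <= k < n.+1 + d) FF n k = T n.
Proof.
elim: d => [|d IH]; first by rewrite addn0 /T big_mkord.
by rewrite addnS big_nat_recr //= IH FF0 ?addr0 //; lia.
Qed.

Definition G (n k : nat) : rat :=
  FF n.+1 k * (k%:R^+2 * (2 * n%:R * k%:R - (2 * n%:R - 1) * (n%:R + 1))) /
  ((n%:R + 1) * (2 * n%:R + 1 - 2 * k%:R)).

Lemma term n k : (0 < n)%N ->
  (n.+1%:R)^+2 * FF n.+1 k - 4 * (3 * n%:R^+2 + 3 * n%:R + 1) * FF n k
  + 32 * n%:R^+2 * FF n.-1 k = G n k.+1 - G n k.
Proof.
move=> hn.
have d1 := FFright n.+1 k.
have d2 := @FFdown n.+1 k (ltn0Sn n).
have d3 := @FFdown n k hn.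
rewrite /= in d2.
have o1 := odd_neq0 n.+1 k.
have o2 := odd_neq0 n k.
have nz1 : (k.+1%:R : rat) != 0 by rewrite pnatr_eq0.
have nz2 : (n.+1%:R : rat) != 0 by rewrite pnatr_eq0.
have nz3 : (n%:R : rat) != 0 by rewrite pnatr_eq0 -lt0n.
have e1 : FF n.+1 k.+1 = FF n.+1 k * (n.+1%:R - k%:R) ^+ 2 * (2 * k%:R + 1) /
   (k.+1%:R ^+ 2 * (2 * n.+1%:R - 2 * k%:R - 1)).
  by rewrite -d1 mulfK // mulf_neq0 // expf_neq0.
have e2 : FF n k = FF n.+1 k * (n.+1%:R - k%:R) ^+ 2 / (2 * n.+1%:R * (2 * n.+1%:R - 2 * k%:R - 1)).
  by rewrite -d2 mulfK // mulf_neq0 // mulf_neq0 // pnatr_eq0.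
have e3 : FF n.-1 k = FF n k * (n%:R - k%:R) ^+ 2 / (2 * n%:R * (2 * n%:R - 2 * k%:R - 1)).
  by rewrite -d3 mulfK // mulf_neq0 // mulf_neq0 // pnatr_eq0.
rewrite /G e1 e3 e2.
field.
have q1 : (2 * n%:R + 1 - 2 * k%:R = 2 * n.+1%:R - 2 * k%:R - 1 :> rat).
  by rewrite -natr1; ring.
have q2 : (2 * n%:R + 1 - 2 * (1 + k%:R) = 2 * n%:R - 2 * k%:R - 1 :> rat).
  by ring.
by rewrite q1 q2 o1 o2 natr1 nz2 nat1r nz1 nz3.
Qed.

Lemma asym n i : (i <= n)%N ->
  ('C(2 * (n - i), n - i) * 'C(2 * n - 2 * (n - i), n - (n - i)) =
   'C(2 * i, i) * 'C(2 * n - 2 * i, n - i))%N.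
Proof.
move=> h; rewrite subKn //.
have -> : (2 * n - 2 * (n - i) = 2 * i)%N by lia.
have -> : (2 * (n - i) = 2 * n - 2 * i)%N by lia.
by rewrite mulnC.
Qed.

Lemma symm n : (0 < n)%N ->
  (\sum_(k < n.+1) 'C(n,k) * 'C(2 * k,k) * 'C(2 * n - 2 * k, n - k) =
   2 * \sum_(1 <= k < n.+1) 'C(n.-1,k.-1) * 'C(2 * k,k) * 'C(2 * n - 2 * k, n - k))%N.
Proof.
case: n => // p _.
set a := fun k => ('C(2 * k,k) * 'C(2 * p.+1 - 2 * k, p.+1 - k))%N.
have eA : (\sum_(1 <= k < p.+2) 'C(p.+1.-1,k.-1) * 'C(2 * k,k) * 'C(2 * p.+1 - 2 * k, p.+1 - k)
   = \sum_(k < p.+1) 'C(p,k) * a k.+1)%N.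
  rewrite big_add1 /= big_mkord; apply: eq_bigr => i _; by rewrite /a mulnA.
rewrite eA.
have eL : (\sum_(k < p.+2) 'C(p.+1,k) * 'C(2 * k,k) * 'C(2 * p.+1 - 2 * k, p.+1 - k)
   = (a 0 + \sum_(k < p.+1) 'C(p,k.+1) * a k.+1) + \sum_(k < p.+1) 'C(p,k) * a k.+1)%N.
  rewrite big_ord_recl /= -addnA -big_split /=; congr (_ + _).
  apply: eq_bigr => i _; rewrite /bump leq0n add1n binS /a; ring.
rewrite eL mul2n -addnn; congr (_ + _).
have eB : (\sum_(k < p.+2) 'C(p,k) * a k = a 0 + \sum_(k<p.+1)'C(p,k.+1)*a k.+1)%N.
  by rewrite big_ord_recl /= bin0 mul1n.
have eC : (\sum_(k < p.+2) 'C(p,k) * a k = \sum_(k<p.+1) 'C(p,k)*a k)%N.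
  by rewrite big_ord_recr /= bin_small // mul0n addn0.
rewrite -eB eC -(big_mkord (fun _ => true) (fun k => 'C(p,k) * a k)) -(big_mkord (fun _ => true) (fun k => 'C(p,k) * a k.+1)) big_nat_rev /=.
apply: eq_big_nat => k /andP[_ hk].
rewrite add0n subSS bin_sub; last by lia.
congr (_ * _); rewrite /a.
have := @asym p.+1 k.+1 hk. rewrite subSS. by [].
Qed.

Lemma Trec n : (0 < n)%N ->
  (n.+1%:R)^+2 * T n.+1 - 4 * (3 * n%:R^+2 + 3 * n%:R + 1) * T n
  + 32 * n%:R^+2 * T n.-1 = 0.
Proof.
move=> hn.
have E : forall m d, (m.+1 + d = n.+3)%N -> \sum_(0 <= k < n.+3) FF m k = T m.
  by move=> m d <-; exact: Text.
rewrite -(E n.+1 1); last by lia.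
rewrite -(E n 2); last by lia.
rewrite -(E n.-1 3); last by lia.
rewrite !mulr_sumr -sumrN -!big_split /=.
rewrite (@telescope_sumr_eq _ _ _ (G n)) //; last by move=> k _; exact: term.
rewrite /G (@FF0 n.+1 n.+3) //.
by rewrite mulr0n expr2 !(mul0r, mulr0) subrr.
Qed.

Lemma ST S : S_rec S -> forall n, ((S n)%:~R : rat) = T n.
Proof.
case=> h0 h1 hr.
suff K : forall n, ((S n)%:~R : rat) = T n /\ ((S n.+1)%:~R : rat) = T n.+1.
  by move=> n; case: (K n).
elim=> [|n [IH1 IH2]].
  split.
    by rewrite h0 /T big_ord1 /FF.
  by rewrite h1 /T big_ord_recr big_ord1 /FF /= -natrD.
split; first by [].
have hT := @Trec n.+1 (ltn0Sn n).
have h := congr1 (fun z : int => (z%:~R : rat)) (hr n.+1 isT).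
rewrite /= in h.
have nz : (n.+2%:R ^+ 2 : rat) != 0 by rewrite expf_neq0 // pnatr_eq0.
apply: (mulfI nz).
have -> : n.+2%:R ^+ 2 * T n.+2 =
   4 * (3 * n.+1%:R ^+ 2 + 3 * n.+1%:R + 1) * T n.+1 - 32 * n.+1%:R ^+ 2 * T n.
  by apply/eqP; rewrite -subr_eq0 -[X in _ == X]hT; apply/eqP; ring.
rewrite -IH1 -IH2.
move: h. rewrite !(rmorphB, rmorphM, rmorphD, rmorphXn, rmorph1) /= -!pmulrn.
move=> h. rewrite h. ring.
Qed.

Theorem lemma2p7 (S : nat -> int) (hS : S_rec S) (n : nat) (hn : (0 < n)%N) :
  S n = 2 * (\sum_(1 <= k < n.+1)
               ('C(n.-1, k.-1) * 'C(2 * k, k) * 'C(2 * n - 2 * k, n - k))%N%:Z).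
Proof.
apply: (@intr_inj rat).
rewrite (@ST S hS) /T.
have -> : \sum_(k < n.+1) FF n k =
   (\sum_(k < n.+1) 'C(n,k) * 'C(2 * k,k) * 'C(2 * n - 2 * k, n - k))%N%:R.
  by rewrite natr_sum.
rewrite symm // natrM natr_sum rmorphM rmorph_sum /=.
by congr (_ * _).
Qed.
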